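(* Let $G=(V(G),E(G))$ be a graph, let $x\in V(G)$, and let $w = UxZx$ be a word-representant of $G$, where $U$ and $Z$ are words, $Z$ contains no occurrence of $x$, and $Z$ contains every letter of $V(G)\setminus\{x\}$. Then the word $w' = UxZ$ also represents $G$.
   Context: All graphs are simple and undirected. For a word $w$ and distinct letters $x,y$, we say $x$ and $y$ alternate in $w$ if deleting all letters other than $x$ and $y$ from $w$ yields either $xyxy\ldots$ or $yxyx\ldots$ (of odd or even length); in particular, if each of $x,y$ occurs once, they alternate. A word $w$ over the alphabet $V(G)$ represents $G$ (is a word-representant of $G$) if every letter of $V(G)$ occurs in $w$ and, for all distinct $x,y\in V(G)$, $xy\in E(G)$ if and only if $x$ and $y$ alternate in $w$. *)

(* Defs.v *)
From mathcomp Require Import all_boot.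
Set Implicit Arguments. Unset Strict Implicit. Unset Printing Implicit Defensive.

Definition simple_graph (T : finType) (e : rel T) : Prop :=
  symmetric e /\ irreflexive e.

Definition restrict2 (T : eqType) (w : seq T) (x y : T) : seq T :=
  [seq z <- w | (z == x) || (z == y)].

Definition alt_word (T : Type) (a b : T) (n : nat) : seq T :=
  [seq (if odd i then b else a) | i <- iota 0 n].

Definition alternate (T : eqType) (w : seq T) (x y : T) : bool :=
  let s := restrict2 w x y in
  (s == alt_word x y (size s)) || (s == alt_word y x (size s)).

Definition represents (T : finType) (e : rel T) (w : seq T) : Prop :=
  (forall v : T, v \in w) /\
  (forall x y : T, x != y -> e x y = alternate w x y).

(* Main.v *)
Require Import Defs.
From mathcomp Require Import all_boot.

Lemma alt_rcons (T : Type) (a b : T) n :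
  alt_word a b n.+1 = rcons (alt_word a b n) (if odd n then b else a).
Proof. by rewrite /alt_word -addn1 iotaD map_cat cats1 /=. Qed.

Lemma rcons_of (T : eqType) (f : seq T) y :
  y \in f -> all (pred1 y) f -> exists f', f = rcons f' y.
Proof.
case/lastP: f => [//|f z] _ /allP H; exists f.
by have := H z; rewrite mem_rcons inE eqxx => /(_ isT) /eqP ->.
Qed.

Lemma keyab (T : eqType) (r' : seq T) (x y a b : T) :
  x != y -> ((a == x) && (b == y)) || ((a == y) && (b == x)) ->
  (rcons (rcons r' y) x == alt_word a b (size (rcons (rcons r' y) x)))
  = (rcons r' y == alt_word a b (size (rcons r' y))).
Proof.
move=> xy hab; rewrite !size_rcons !alt_rcons !eqseq_rcons /=.
case: (r' == _) => //=.
have yx : (y == x) = false by rewrite eq_sym (negbTE xy).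
case: (odd (size r')) => /=;
  case/orP: hab => /andP[/eqP-> /eqP->];
  by rewrite ?eqxx ?(negbTE xy) ?yx.
Qed.

Lemma alt_sym (T : eqType) (w : seq T) a b : alternate w a b = alternate w b a.
Proof.
rewrite /alternate /restrict2.
have -> : [seq z <- w | (z == a) || (z == b)] = [seq z <- w | (z == b) || (z == a)]
  by apply: eq_filter => z; rewrite orbC.
by rewrite orbC.
Qed.

Lemma wx (T : eqType) (U Z : seq T) x :
  U ++ x :: Z ++ [:: x] = (U ++ x :: Z) ++ [:: x].
Proof. by rewrite -catA. Qed.

Lemma alt_x (T : eqType) (U Z : seq T) x y :
  y != x -> x \notin Z -> y \in Z ->
  alternate (U ++ x :: Z ++ [:: x]) x y = alternate (U ++ x :: Z) x y.
Proof.
move=> yx xZ yZ.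
set r := restrict2 (U ++ x :: Z) x y.
have E : restrict2 (U ++ x :: Z ++ [:: x]) x y = rcons r x.
  by rewrite /r /restrict2 wx filter_cat /= eqxx cats1.
have [f' Ef] : exists f', [seq z <- Z | (z == x) || (z == y)] = rcons f' y.
  apply: rcons_of; first by rewrite mem_filter eqxx orbT yZ.
  apply/allP => z; rewrite mem_filter => /andP[/orP[/eqP Ez|//] zZ].
  by move: xZ; rewrite -Ez zZ.
have Er : r = rcons ([seq z <- U ++ [:: x] | (z == x) || (z == y)] ++ f') y.
  by rewrite /r /restrict2 -cat1s catA filter_cat Ef rcons_cat.
have xy : x != y by rewrite eq_sym.
rewrite /alternate E -/r Er (@keyab _ _ x y x y xy) ?eqxx //.
by rewrite (@keyab _ _ x y y x xy) ?eqxx ?orbT.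
Qed.

Theorem mainTheorem2 (T : finType) (e : rel T) (x : T) (U Z : seq T) :
  simple_graph e ->
  represents e (U ++ x :: Z ++ [:: x]) ->
  x \notin Z ->
  (forall v : T, v != x -> v \in Z) ->
  represents e (U ++ x :: Z).
Proof.
move=> _ [Hin He] xZ HZ; split.
  move=> v; case: (eqVneq v x) => [->|vx].
    by rewrite mem_cat in_cons eqxx orbT.
  by rewrite mem_cat in_cons (HZ v vx) !orbT.
move=> a b ab; rewrite He //.
case: (eqVneq a x) => [Ea|ax].
  by rewrite Ea alt_x // ?HZ // -Ea eq_sym.
case: (eqVneq b x) => [Eb|bx].
  by rewrite Eb (@alt_sym _ _ a x) (@alt_x _ U Z x a ax xZ (HZ a ax)) alt_sym.
have -> : U ++ x :: Z ++ [:: x] = (U ++ x :: Z) ++ [:: x] by rewrite -catA.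
rewrite /alternate /restrict2 filter_cat /=.
by rewrite (eq_sym x a) (negbTE ax) (eq_sym x b) (negbTE bx) cats0.
Qed.
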